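(* Let $M$ be a binary matroid with set of bases $\mathcal{B}$, and let $\mathcal{B}_1\subseteq\mathcal{B}$ be the set of bases of some matroid $M_1$ (on the same ground set). If there is $X\in\mathcal{B}_1$ such that every vertex adjacent to $X$ in $G(M)$ lies in $\mathcal{B}_1$, then $\mathcal{B}_1=\mathcal{B}$.
   Context: A matroid is binary if it is representable over $\mathbb{F}_2$. The base graph $G(M)$ has the bases of $M$ as vertices, two bases being adjacent iff their symmetric difference has exactly two elements. *)

(* Defs.v *)
From HB Require Import structures.
From mathcomp Require Import all_boot all_order all_algebra all_fingroup all_field.
Set Implicit Arguments. Unset Strict Implicit. Unset Printing Implicit Defensive.
Import GRing.Theory.
Local Open Scope ring_scope.

Definition matroid_bases (E : finType) (B : {set {set E}}) : Prop :=
  B != set0 /\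
  forall B1 B2, B1 \in B -> B2 \in B -> forall x, x \in B1 :\: B2 ->
    exists2 y, y \in B2 :\: B1 & (B1 :\ x) :|: [set y] \in B.

Definition rows_of (E : finType) (r : nat) (v : E -> 'rV['F_2]_r) (X : {set E})
  : 'M['F_2]_(#|X|, r) := \matrix_(i < #|X|) v (enum_val i).

Definition vec_basis (E : finType) (r : nat) (v : E -> 'rV['F_2]_r) (X : {set E}) : bool :=
  (\rank (rows_of v X) == #|X|)%N && (\rank (rows_of v X) == \rank (rows_of v [set: E]))%N.

Definition binary_bases (E : finType) (B : {set {set E}}) : Prop :=
  exists r (v : E -> 'rV['F_2]_r), forall X : {set E}, (X \in B) = vec_basis v X.

Definition base_adj (E : finType) (X Y : {set E}) : bool :=
  #|(X :\: Y) :|: (Y :\: X)| == 2%N.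

(* Main.v *)
Require Import Defs.
From HB Require Import structures.
From mathcomp Require Import all_boot all_order all_algebra all_fingroup all_field.
Set Implicit Arguments. Unset Strict Implicit. Unset Printing Implicit Defensive.
Import GRing.Theory.

Section Lin.
Variables (E : finType) (r : nat) (v : E -> 'rV['F_2]_r).
Local Open Scope ring_scope.

Definition comb (a : E -> 'F_2) (S : {set E}) : 'rV['F_2]_r := \sum_(e in S) a e *: v e.
Definition indep (S : {set E}) := forall a, comb a S = 0 -> forall e, e \in S -> a e = 0.

Lemma span_sub (S : {set E}) e : e \in S -> (v e <= rows_of v S)%MS.
Proof.
move=> He; have := row_sub (enum_rank_in He e) (rows_of v S).
by rewrite rowK enum_rankK_in.
Qed.

Lemma comb_sub a (S : {set E}) : (comb a S <= rows_of v S)%MS.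
Proof. by apply: summx_sub => e He; apply: scalemx_sub; apply: span_sub. Qed.

Lemma sub_comb w (S : {set E}) : (w <= rows_of v S)%MS -> exists a, w = comb a S.
Proof.
case/submxP=> D ->; exists (fun e => \sum_(i < #|S| | enum_val i == e) D 0 i).
rewrite mulmx_sum_row /comb (big_enum_val (fun e => _ *: v e)) /=.
apply: eq_bigr => i _; rewrite rowK; congr (_ *: _).
rewrite (big_pred1 i) // => j /=; apply/eqP/eqP => [/enum_val_inj|->] //.
Qed.

Lemma vb_indep (S : {set E}) : vec_basis v S -> indep S.
Proof.
case/andP=> /eqP Hr _ a Ha e He.
have Hf : row_free (rows_of v S) by rewrite /row_free Hr.
have Hu : (\row_i a (enum_val i)) *m rows_of v S = comb a S.
  rewrite mulmx_sum_row /comb (big_enum_val (fun e => _ *: v e)) /=.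
  by apply: eq_bigr => i _; rewrite rowK mxE.
have : (\row_i a (enum_val i)) *m rows_of v S == 0 by rewrite Hu Ha.
rewrite mulmx_free_eq0 // => /eqP/rowP/(_ (enum_rank_in He e)).
by rewrite !mxE enum_rankK_in.
Qed.

Lemma rows_all (S : {set E}) : (rows_of v S <= rows_of v [set: E])%MS.
Proof. by apply/row_subP => i; rewrite rowK span_sub ?inE. Qed.

Lemma vb_span (S : {set E}) : vec_basis v S -> forall e, (v e <= rows_of v S)%MS.
Proof.
case/andP=> _ /eqP Hr e.
have := mxrank_leqif_sup (rows_all S); rewrite Hr => -[_ /esym].
rewrite eqxx => H; apply: submx_trans (H); exact: span_sub (in_setT e).
Qed.

Lemma vb_card (S : {set E}) : vec_basis v S -> #|S| = \rank (rows_of v [set: E]).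
Proof. by case/andP=> /eqP H1 /eqP H2; rewrite -H1 H2. Qed.

Lemma span_vb (S : {set E}) : #|S| = \rank (rows_of v [set: E]) ->
  (forall e, (v e <= rows_of v S)%MS) -> vec_basis v S.
Proof.
move=> Hc Hs.
have Hsub : (rows_of v [set: E] <= rows_of v S)%MS.
  by apply/row_subP => i; rewrite rowK.
have Heq : \rank (rows_of v S) = \rank (rows_of v [set: E]).
  by apply/eqP; rewrite eqn_leq !mxrankS // rows_all.
by rewrite /vec_basis Heq Hc !eqxx.
Qed.


Lemma F2_cases (t : 'F_2) : t = 0 \/ t = 1.
Proof.
case: t => [[|[|n]]] Hn; [left|right|by []]; exact: val_inj.
Qed.

Lemma comb_setD1 a (S : {set E}) y : y \in S ->
  comb a S = a y *: v y + comb a (S :\ y).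
Proof. by move=> Hy; rewrite /comb (big_setD1 _ Hy). Qed.

Lemma comb_delta (S : {set E}) x : x \in S ->
  comb (fun e => (e == x)%:R) S = v x.
Proof.
move=> Hx; rewrite (comb_setD1 _ Hx) eqxx scale1r /comb big1 ?addr0 // => e.
by rewrite !inE => /andP[/negbTE -> _]; rewrite scale0r.
Qed.

Lemma combB d1 d2 (S : {set E}) :
  comb (fun e => d1 e - d2 e) S = comb d1 S - comb d2 S.
Proof. by rewrite /comb -sumrB; apply: eq_bigr => e _; rewrite scalerBl. Qed.

Lemma exch_basis (Y : {set E}) y e a : vec_basis v Y -> y \in Y -> e \notin Y ->
  v e = comb a Y -> a y = 1 -> vec_basis v (Y :\ y :|: [set e]).
Proof.
move=> HY Hy He Hve Hay; apply: span_vb.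
  rewrite setUC cardsU1 -(vb_card HY) (cardsD1 y Y) Hy !inE.
  by rewrite (negbTE He) andbF.
have Hsub : (rows_of v Y <= rows_of v (Y :\ y :|: [set e]))%MS.
  apply/row_subP => i; rewrite rowK.
  have Hi := enum_valP i.
  case: (eqVneq (enum_val i) y) => [Hiy|Hiy]; last first.
    by apply: span_sub; rewrite !inE Hiy Hi.
  rewrite Hiy.
  have -> : v y = v e - comb a (Y :\ y).
    by rewrite Hve (comb_setD1 _ Hy) Hay scale1r addrK.
  apply: addmx_sub; first by apply: span_sub; rewrite !inE eqxx orbT.
  rewrite -scaleN1r; apply: scalemx_sub; apply: summx_sub => z Hz.
  by apply: scalemx_sub; apply: span_sub; rewrite inE Hz.
move=> w; exact: submx_trans (vb_span HY w) Hsub.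
Qed.

Lemma exch_nbasis (Y : {set E}) y e a : y \in Y -> e \notin Y ->
  v e = comb a Y -> vec_basis v (Y :\ y :|: [set e]) -> a y != 0.
Proof.
move=> Hy He Hve /vb_indep Hind; apply/eqP => Hay.
pose b z := if z == e then -1 else a z.
have Hn : e \notin Y :\ y by rewrite inE (negbTE He) andbF.
have : comb b (Y :\ y :|: [set e]) = 0.
  rewrite setUC /comb big_setU1 //= /b eqxx.
  rewrite (eq_bigr (fun z => a z *: v z)); last first.
    by move=> z Hz; case: eqP Hz => // ->; rewrite (negbTE Hn).
  have := Hve; rewrite (comb_setD1 _ Hy) Hay scale0r add0r /comb => <-.
  by rewrite scaleN1r addNr.
move/Hind/(_ e); rewrite !inE eqxx orbT /b eqxx => /(_ isT) /eqP.
by rewrite oppr_eq0 oner_eq0.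
Qed.

Lemma gen_dep (X Y : {set E}) d a : indep X ->
  comb d (X :\: Y) = comb a Y -> (forall z, z \in Y :\: X -> a z = 0) ->
  forall e, e \in X :\: Y -> d e = 0.
Proof.
move=> HX Hd Ha e He.
pose b z := if z \in Y then - a z else d z.
have : comb b X = 0.
  rewrite /comb (big_setID (A := X) Y) /=.
  rewrite (eq_bigr (fun z => - (a z *: v z))); last first.
    by move=> z; rewrite inE /b => /andP[_ ->]; rewrite scaleNr.
  rewrite [Q in _ + Q](eq_bigr (fun z => d z *: v z)); last first.
    by move=> z; rewrite inE /b => /andP[/negbTE -> _].
  rewrite sumrN -/(comb d _) Hd /comb (big_setID (A := Y) X) /=.
  have -> : \sum_(i in Y :\: X) a i *: v i = 0.
    by apply: big1 => z /Ha ->; rewrite scale0r.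
  rewrite addr0.
  by rewrite setIC addNr.
move/HX/(_ e); move: He; rewrite inE => /andP[HeY HeX].
by rewrite /b (negbTE HeY) => /(_ HeX).
Qed.

Lemma G1 (X Y : {set E}) x a : indep X -> x \in X :\: Y -> v x = comb a Y ->
  (forall z, z \in Y :\: X -> a z = 0) -> False.
Proof.
move=> HX Hx Hv Ha.
have := gen_dep (d := fun e => (e == x)%:R) HX _ Ha Hx.
rewrite comb_delta // eqxx => /(_ Hv) /eqP; by rewrite oner_eq0.
Qed.

Lemma G2 (X Y : {set E}) x1 x2 a1 a2 : indep X -> x1 \in X :\: Y -> x2 \in X :\: Y ->
  x1 != x2 -> v x1 = comb a1 Y -> v x2 = comb a2 Y ->
  (forall z, z \in Y :\: X -> a1 z = a2 z) -> False.
Proof.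
move=> HX H1 H2 Hne Hv1 Hv2 Ha.
have := gen_dep (d := fun e => (e == x1)%:R - (e == x2)%:R)
  (a := fun e => a1 e - a2 e) (Y := Y) HX.

rewrite (combB (fun e => (e == x1)%:R) (fun e => (e == x2)%:R)) (combB a1 a2) !comb_delta // -Hv1 -Hv2 => /(_ erefl).
move=> /(_ _ _ H1); rewrite eqxx (negbTE Hne) subr0.
have H : forall z, z \in Y :\: X -> a1 z - a2 z = 0 by move=> z /Ha ->; rewrite subrr.
by move=> /(_ H) /eqP; rewrite oner_eq0.
Qed.

End Lin.

Unset Implicit Arguments.

Theorem lemma3 (E : finType) (B B1 : {set {set E}}) :
  matroid_bases B -> binary_bases B ->
  matroid_bases B1 -> B1 \subset B ->
  (exists2 X, X \in B1 & forall Y, Y \in B -> base_adj X Y -> Y \in B1) ->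
  B1 = B.
Proof.
move=> _ [r [v Hv]] [_ Hex1] Hsub [X HX1 Hadj].
have HXB : vec_basis v X by rewrite -Hv (subsetP Hsub).
have HXi := vb_indep HXB.
have base : forall Y, Y \in B -> #|X :\: Y| = 0 -> Y \in B1.
  move=> Y HY /eqP; rewrite cards_eq0 setD_eq0 => HXY.
  have -> : Y = X; last by [].
  have HYb : vec_basis v Y by rewrite -Hv.
  apply/eqP; rewrite eq_sym eqEcard HXY (vb_card HXB) (vb_card HYb).
  by rewrite leqnn.
have cardsym : forall Y, Y \in B -> #|Y :\: X| = #|X :\: Y|.
  move=> Y HY; have HYb : vec_basis v Y by rewrite -Hv.
  have := cardsID Y X; have := cardsID X Y.
  rewrite (vb_card HXB) (vb_card HYb) setIC => <- /eqP.
  by rewrite eqn_add2l => /eqP.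
have main : forall n Y, #|X :\: Y| <= n -> Y \in B -> Y \in B1.
  elim=> [|n IH] Y Hn HYB.
    by apply: base => //; apply/eqP; rewrite -leqn0.
  have HY : vec_basis v Y by rewrite -Hv.
  case Hk : #|X :\: Y| => [|[|k]].
  - exact: base.
  - apply: Hadj => //; rewrite /base_adj cardsU Hk cardsym // Hk.
    rewrite (_ : _ :&: _ = set0) ?cards0 //.
    by apply/setP => z; rewrite !inE; case: (z \in X); case: (z \in Y).
  have HYi := vb_indep HY.
  have close : forall y e, y \in Y :\: X -> e \in X :\: Y ->
      vec_basis v (Y :\ y :|: [set e]) -> (Y :\ y :|: [set e]) \in B1.
    move=> y e Hy He Hb; apply: IH; last by rewrite Hv.
    have -> : X :\: (Y :\ y :|: [set e]) = (X :\: Y) :\ e.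
      move: Hy He; rewrite !inE => /andP[HyX HyY] /andP[HeY HeX].
      apply/setP => z; rewrite !inE.
      case: (eqVneq z e) => [->|Hze].
        by rewrite orbT.
      case: (eqVneq z y) => [->|Hzy]; first by rewrite (negbTE HyX) !andbF.
      by case: (z \in Y); case: (z \in X).
    move: Hn; rewrite (cardsD1 e (X :\: Y)) He.
    by rewrite add1n ltnS.
  have key : forall x1 x2 a1 a2 y, x1 \in X :\: Y -> x2 \in X :\: Y -> x1 != x2 ->
      v x1 = comb v a1 Y -> v x2 = comb v a2 Y -> y \in Y :\: X ->
      a1 y = 1%R -> a2 y = 0%R -> Y \in B1.
    move=> x1 x2 a1 a2 y H1 H2 Hne Hv1 Hv2 Hy Ha1 Ha2.
    have [y2 Hy2 Ha2y2] : exists2 y2, y2 \in Y :\: X & a2 y2 = 1%R.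
      case: (pickP (fun z => (z \in Y :\: X) && (a2 z == 1%R))) => [z /andP[Hz /eqP Hz1]|H].
        by exists z.
      exfalso; apply: (G1 HXi H2 Hv2) => z Hz.
      move: (H z); rewrite Hz /=; case: (F2_cases (a2 z)) => -> //.
    have Hy1 : y \in Y by move: Hy; rewrite inE => /andP[].
    have Hy21 : y2 \in Y by move: Hy2; rewrite inE => /andP[].
    have Hx1 : x1 \notin Y by move: H1; rewrite inE => /andP[].
    have Hx2 : x2 \notin Y by move: H2; rewrite inE => /andP[].
    have HZb := exch_basis HY Hy1 Hx1 Hv1 Ha1.
    have HWb := exch_basis HY Hy21 Hx2 Hv2 Ha2y2.
    have HZ := close _ _ Hy H1 HZb.
    have HW := close _ _ Hy2 H2 HWb.
    have Hx1ZW : x1 \in (Y :\ y :|: [set x1]) :\: (Y :\ y2 :|: [set x2]).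
      by rewrite !inE eqxx (negbTE Hx1) (negbTE Hne) /= !andbF.
    have [y' Hy' HB'] := Hex1 _ _ HZ HW x1 Hx1ZW.
    case: (eqVneq y' x2) => Hyx2.
      exfalso; move: HB'; rewrite Hyx2.
      have -> : (Y :\ y :|: [set x1]) :\ x1 :|: [set x2] = Y :\ y :|: [set x2].
        apply/setP => z; rewrite !inE.
        case: (eqVneq z x1) => [->|Hz1]; last first.
          by rewrite orbF.
        by rewrite (negbTE Hx1) andbF.
      move/(subsetP Hsub); rewrite Hv => Hb.
      by move: (exch_nbasis Hy1 Hx2 Hv2 Hb); rewrite Ha2 eqxx.
    have Hyy : y' = y.
      apply/eqP; apply/negPn/negP => Hne'; move: Hy'; rewrite !inE Hne' (negbTE Hyx2) /=.
      by case: (y' \in Y); rewrite ?andbF ?orbT ?andbT.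
    move: HB'; rewrite Hyy.
    have -> : (Y :\ y :|: [set x1]) :\ x1 :|: [set y] = Y; last by [].
    apply/setP => z; rewrite !inE.
    case: (eqVneq z y) => [->|]; first by rewrite Hy1 orbT.
    case: (eqVneq z x1) => [->|] //=; first by rewrite (negbTE Hx1).
    by rewrite !orbF.
  have [x1 H1] : exists x1, x1 \in X :\: Y.
    by apply/set0Pn; rewrite -card_gt0 Hk.
  have [x2 H2'] : exists x2, x2 \in (X :\: Y) :\ x1.
    apply/set0Pn; rewrite -card_gt0.
    by move: Hk; rewrite (cardsD1 x1) H1 add1n => [[->]].
  have Hne : x1 != x2 by move: H2'; rewrite !inE eq_sym => /andP[].
  have H2 : x2 \in X :\: Y by move: H2'; rewrite inE => /andP[].
  have [a1 Hv1] := sub_comb (vb_span HY x1).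
  have [a2 Hv2] := sub_comb (vb_span HY x2).
  case: (pickP (fun z => (z \in Y :\: X) && (a1 z != a2 z))) => [y /andP[Hy Hd]|H].
    case: (F2_cases (a1 y)) => Ha1; case: (F2_cases (a2 y)) => Ha2.
    - by move: Hd; rewrite Ha1 Ha2 eqxx.
    - by apply: (key x2 x1 a2 a1 y H2 H1 _ Hv2 Hv1 Hy Ha2 Ha1); rewrite eq_sym.
    - exact: (key x1 x2 a1 a2 y H1 H2 Hne Hv1 Hv2 Hy Ha1 Ha2).
    - by move: Hd; rewrite Ha1 Ha2 eqxx.
  exfalso; apply: (G2 HXi H1 H2 Hne Hv1 Hv2) => z Hz.
  by move: (H z); rewrite Hz /= => /negbFE/eqP.
apply/eqP; rewrite eqEsubset Hsub /=; apply/subsetP => Y HY.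
exact: (main _ Y (leqnn _) HY).
Qed.
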